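(* For every $j\in\mathsf{R}\setminus\mathsf{R}'$ it holds: $\mathrm{Lroot}(j-1)=\mathrm{Lroot}(j)$, $\mathrm{end}(j-1)=\mathrm{end}(j)$, $\mathrm{Ltail}(j-1)=\mathrm{Ltail}(j)$, $\mathrm{efull}(j-1)=\mathrm{efull}(j)$, and $\mathrm{type}(j-1)=\mathrm{type}(j)$.
   Context: $T\in[0\mathinner{.\,.}\sigma)^n$ with $2\le\sigma<n^{1/7}$; $\tau=\lfloor\mu\log_\sigma n\rfloor$ for a fixed positive constant $\mu<1/6$ with $\tau\ge1$. $\mathrm{per}(S)$ is the shortest period of $S$. $\mathsf{R}=\{i\in[1\mathinner{.\,.}n-3\tau+2]:\mathrm{per}(T[i\mathinner{.\,.}i+3\tau-2])\le\tau/3\}$ and $\mathsf{R}'=\{j\in\mathsf{R}:j-1\notin\mathsf{R}\}$. For $j\in\mathsf{R}$: $\mathrm{end}(j)=\min\{j'\ge j:j'\notin\mathsf{R}\}+3\tau-2$; with $p=\mathrm{per}(T[j\mathinner{.\,.}j+3\tau-1))$, $\mathrm{Lroot}(j)=\min\{T[j+t\mathinner{.\,.}j+t+p):t\in[0\mathinner{.\,.}p)\}$ (lexicographic minimum); with $H=\mathrm{Lroot}(j)$, $T[j\mathinner{.\,.}\mathrm{end}(j))$ is uniquely written as $H'H^kH''$ with $H'$ a proper suffix and $H''$ a proper prefix of $H$, and $\mathrm{Ltail}(j)=|H''|$; $\mathrm{efull}(j)=\mathrm{end}(j)-\mathrm{Ltail}(j)$; $\mathrm{type}(j)=+1$ if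 $\mathrm{end}(j)\le n$ and $T[\mathrm{end}(j)]\succ T[\mathrm{end}(j)-|H|]$, and $\mathrm{type}(j)=-1$ otherwise. *)

(* Defs.v *)
From Stdlib Require Import Reals ZArith.
From mathcomp Require Import all_boot.
Set Implicit Arguments. Unset Strict Implicit. Unset Printing Implicit Defensive.

(* Text T is a seq nat; positions are 1-indexed: T[i] = nth 0 T (i-1). *)
Definition chr (T : seq nat) (i : nat) : nat := nth 0 T i.-1.

(* T[i .. j) (1-indexed, half-open), i.e. T[i], ..., T[j-1]. *)
Definition sub (T : seq nat) (i j : nat) : seq nat := drop i.-1 (take j.-1 T).

Definition is_period (S : seq nat) (p : nat) : bool :=
  all (fun k => nth 0 S k == nth 0 S (k + p)) (iota 0 (size S - p)).

(* shortest period per(S): the least p >= 1 that is a period of S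
   (|S| is always a period, so for nonempty S the search succeeds). *)
Definition per (S : seq nat) : nat :=
  find (fun p => (0 < p) && is_period S p) (iota 0 (size S).+1).

Definition tau_of (mu : R) (sigma n : nat) : nat :=
  Z.to_nat (Int_part (Rmult mu (Rdiv (ln (INR n)) (ln (INR sigma))))).

Section Runs.
Variables (T : seq nat) (tau : nat).
Let n := size T.

Definition inR (i : nat) : bool :=
  [&& 1 <= i, i + 3 * tau <= n + 2 & 3 * per (sub T i (i + 3 * tau - 1)) <= tau].

Definition inR' (j : nat) : bool := inR j && ~~ inR j.-1.

(* end(j) = min { j' >= j : j' notin R } + 3tau - 2 *)
Definition endR (j : nat) : nat :=
  j + find (fun d => ~~ inR (j + d)) (iota 0 (j + n).+3) + 3 * tau - 2.

Definition perj (j : nat) : nat := per (sub T j (j + 3 * tau - 1)).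

Fixpoint lexle (s t : seq nat) : bool :=
  match s, t with
  | [::], _ => true
  | _ :: _, [::] => false
  | a :: s', b :: t' => (a < b) || ((a == b) && lexle s' t')
  end.

Definition lexmin (s t : seq nat) : seq nat := if lexle s t then s else t.

Definition Lroot (j : nat) : seq nat :=
  let p := perj j in
  foldr lexmin (sub T j (j + p))
        [seq sub T (j + t) (j + t + p) | t <- iota 0 p].

(* S = H' H^k H'' with H' a proper suffix (length a < |H|) and
   H'' a proper prefix (length c < |H|) of H *)
Definition decomp (S H : seq nat) (a k c : nat) : bool :=
  [&& a < size H, c < size H &
      S == drop (size H - a) H ++ flatten (nseq k H) ++ take c H].

(* Ltail(j) = |H''| in the (unique) decomposition of T[j .. end(j)) *)
Definition Ltail (j : nat) : nat :=
  let H := Lroot j in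
  let S := sub T j (endR j) in
  find (fun c => has (fun a => has (fun k => decomp S H a k c)
                                   (iota 0 (size S).+1))
                     (iota 0 (size H)))
       (iota 0 (size H)).

Definition efull (j : nat) : nat := endR j - Ltail j.

Definition typeR (j : nat) : Z :=
  if (endR j <= n) && (chr T (endR j - size (Lroot j)) < chr T (endR j))
  then 1%Z else (-1)%Z.
End Runs.

(* Main.v *)
Require Import Defs.
From Stdlib Require Import Reals ZArith.
From mathcomp Require Import all_boot.
Set Warnings "-notation-overridden".
From mathcomp Require Import zify.
Set Implicit Arguments. Unset Strict Implicit.

Lemma sub_nth (T : seq nat) a b k : a + k < b -> nth 0 (sub T a.+1 b.+1) k = nth 0 T (a + k).
Proof. move=> h; rewrite /sub /= nth_drop nth_take //. Qed.

Lemma size_sub' (T : seq nat) a b : b <= size T -> size (sub T a.+1 b.+1) = b - a.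
Proof. move=> h; rewrite /sub /= size_drop size_takel //. Qed.

Lemma is_periodP S p : reflect (forall k, k + p < size S -> nth 0 S k = nth 0 S (k+p)) (is_period S p).
Proof.
apply: (iffP allP) => H k.
  move=> Hk; apply/eqP/H; rewrite mem_iota; lia.
rewrite mem_iota => Hk; apply/eqP/H; lia.
Qed.

Lemma Tper_of (T : seq nat) a b p : b <= size T -> is_period (sub T a.+1 b.+1) p ->
  forall k, a <= k -> k + p < b -> nth 0 T k = nth 0 T (k+p).
Proof.
move=> hb /is_periodP H k ak kb.
have := H (k - a); rewrite size_sub' // !sub_nth; try lia.
have -> : a + (k - a) = k by lia.
have -> : a + (k - a + p) = k + p by lia.
move=> -> //; lia.
Qed.

Lemma of_Tper (T : seq nat) a b p : b <= size T -> a <= b ->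
  (forall k, a <= k -> k + p < b -> nth 0 T k = nth 0 T (k+p)) ->
  is_period (sub T a.+1 b.+1) p.
Proof.
move=> hb ab H; apply/is_periodP => k; rewrite size_sub' // => hk.
rewrite !sub_nth; try lia. rewrite addnA; apply: H; lia.
Qed.

Lemma per_min S q : 0 < q -> q <= size S -> is_period S q -> per S <= q.
Proof.
move=> q0 qs qp; rewrite /per.
case: (leqP (find (fun p => (0 < p) && is_period S p) (iota 0 (size S).+1)) q) => // lt.
have := before_find 0 lt; rewrite nth_iota; last lia.
by rewrite add0n q0 qp.
Qed.

Lemma per_pos S : 0 < size S -> 0 < per S /\ is_period S (per S).
Proof.
move=> s0.
have hh : has (fun p => (0 < p) && is_period S p) (iota 0 (size S).+1).
  apply/hasP; exists (size S); first by rewrite mem_iota add0n leq0n ltnSn.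
  by rewrite s0 /is_period subnn.
have := nth_find 0 hh; rewrite has_find size_iota in hh.
rewrite /per nth_iota // add0n => /andP[] //.
Qed.

Lemma find_iota_spec (a : pred nat) m f : f < m -> a f -> (forall d, d < f -> ~~ a d) ->
  find a (iota 0 m) = f.
Proof.
move=> fm af hb.
have hh : has a (iota 0 m) by apply/hasP; exists f => //; rewrite mem_iota add0n leq0n.
have := nth_find 0 hh; have := hh; rewrite has_find size_iota => Fm.
rewrite nth_iota // add0n => aF.
case: (ltngtP (find a (iota 0 m)) f) => // c.
  by move: (hb _ c); rewrite aF.
by have := before_find 0 c; rewrite nth_iota // add0n af.
Qed.

Lemma find_iota_props (a : pred nat) m : has a (iota 0 m) ->
  [/\ find a (iota 0 m) < m, a (find a (iota 0 m)) & forall d, d < find a (iota 0 m) -> ~~ a d].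
Proof.
move=> hh; have := nth_find 0 hh; have := hh; rewrite has_find size_iota => Fm.
rewrite nth_iota // add0n => aF; split => // d hd.
by have := before_find 0 hd; rewrite nth_iota ?add0n => [->|]; last lia.
Qed.

Lemma lexle_refl s : lexle s s.
Proof. by elim: s => //= a s ->; rewrite eqxx orbT. Qed.

Lemma lexle_total s t : lexle s t || lexle t s.
Proof.
elim: s t => [|a s IH] [|b t] //=.
case: (ltngtP a b) => [h|h|h] /=; rewrite ?orbT //; subst; by rewrite ?eqxx ?IH.
Qed.

Lemma lexle_trans s t u : lexle s t -> lexle t u -> lexle s u.
Proof.
elim: s t u => [|a s IH] [|b t] [|c u] //=.
case/orP=> [ab|/andP[/eqP <- st]]; case/orP=> [bc|/andP[/eqP <- tu]].
- by rewrite (ltn_trans ab bc).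
- by rewrite ab.
- by rewrite bc.
- by rewrite eqxx (IH _ _ st tu) orbT.
Qed.

Lemma lexle_anti s t : lexle s t -> lexle t s -> s = t.
Proof.
elim: s t => [|a s IH] [|b t] //=.
case/orP=> [ab|/andP[/eqP <- st]]; case/orP=> [ba|/andP[/eqP ba ts]]; try lia.
by rewrite (IH _ st ts).
Qed.

Lemma foldr_lexmin x0 s : foldr lexmin x0 s \in x0 :: s /\
  forall y, y \in x0 :: s -> lexle (foldr lexmin x0 s) y.
Proof.
elim: s => [|a s [IH1 IH2]] /=.
  by split; rewrite ?mem_head // => y; rewrite inE => /eqP ->; apply: lexle_refl.
rewrite /lexmin; case: ifP => h; split.
- by rewrite !inE eqxx orbT.
- move=> y; rewrite !inE => /or3P[/eqP->|/eqP->|ys].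
  + apply: lexle_trans h (IH2 _ (mem_head _ _)).
  + exact: lexle_refl.
  + by apply: lexle_trans h (IH2 _ _); rewrite inE ys orbT.
- by move: IH1; rewrite !inE => /orP[->|->]; rewrite ?orbT.
- move=> y; rewrite !inE => /or3P[/eqP->|/eqP->|ys].
  + exact: IH2 (mem_head _ _).
  + by have := lexle_total a (foldr lexmin x0 s); rewrite h.
  + by apply: IH2; rewrite inE ys orbT.
Qed.

Lemma foldr_lexmin_eq x0 s y0 t :
  (forall y, y \in x0 :: s -> y \in y0 :: t) ->
  (forall y, y \in y0 :: t -> y \in x0 :: s) ->
  foldr lexmin x0 s = foldr lexmin y0 t.
Proof.
move=> h1 h2; have [m1 l1] := foldr_lexmin x0 s; have [m2 l2] := foldr_lexmin y0 t.
by apply: lexle_anti; [apply: l1; apply: h2 | apply: l2; apply: h1].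
Qed.
Lemma size_flat_nseq (H : seq nat) k : size (flatten (nseq k H)) = k * size H.
Proof. elim: k => //= k IH; rewrite size_cat IH mulSn. done. Qed.

Lemma flat_nseqS (H : seq nat) k : flatten (nseq k.+1 H) = H ++ flatten (nseq k H).
Proof. by []. Qed.

Lemma decomp_size S H a k c : decomp S H a k c -> size S = a + k * size H + c.
Proof.
case/and3P => ha hc /eqP ->; rewrite !size_cat size_drop size_flat_nseq size_takel; lia.
Qed.

Lemma decomp_hasP S H c : 0 < size H ->
  reflect (exists a k, decomp S H a k c)
    (has (fun a => has (fun k => decomp S H a k c) (iota 0 (size S).+1)) (iota 0 (size H))).
Proof.
move=> hp; apply: (iffP hasP).
  by case=> a _ /hasP[k _ h]; exists a, k.
case=> a [k h]; have hs := decomp_size h.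
move: (h) => /and3P[ha _ _].
exists a; first by rewrite mem_iota; lia.
apply/hasP; exists k => //; rewrite mem_iota. nia.
Qed.

Lemma decomp_shift S H x c : 0 < size H -> 2 * size H <= size S -> x = nth 0 S (size H).-1 ->
  (exists a k, decomp (x :: S) H a k c) <-> (exists a k, decomp S H a k c).
Proof.
move=> hp hS hx; split.
- case=> a [k dec]; have hs := decomp_size dec.
  move: dec => /and3P[ha hc /eqP E].
  case: a ha E hs => [|a] ha E hs.
  + case: k E hs => [|k] E hs; first by simpl in hs; lia.
    move: E; rewrite subn0 drop_size /= ?flat_nseqS.
    case: H hp ha hc hS hx hs => [|h H'] //= hp ha hc hS hx hs [_ E].
    exists (size H'), k; apply/and3P; split => //=.
    by apply/eqP; rewrite subSn // subnn /= drop0 E -catA.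
  + move: E; rewrite (drop_nth 0); last by lia.
    case=> _ E; exists a, k; apply/and3P; split => //; first by lia.
    apply/eqP; rewrite E; congr (drop _ H ++ _); lia.
- case=> a [k dec]; have hs := decomp_size dec.
  move: dec => /and3P[ha hc /eqP E].
  case: k E hs => [|k] E hs; first by simpl in hs; lia.
  have hx' : x = nth 0 H (size H - a).-1.
    rewrite hx E nth_cat size_drop.
    have -> : (size H).-1 < size H - (size H - a) = false by lia.
    rewrite flat_nseqS -catA nth_cat ifT; last by lia.
    congr nth; lia.
  case: (ltnP a.+1 (size H)) => hlt.
  + exists a.+1, k.+1; apply/and3P; split => //.
    apply/eqP; rewrite E [drop (size H - a.+1) H](drop_nth 0); last by lia.
    rewrite hx' /=; congr (_ :: _).
      congr nth; lia.
    congr (drop _ H ++ _); lia.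
  + exists 0, k.+2; apply/and3P; split => //.
    apply/eqP; rewrite E subn0 drop_size /= -!catA.
    have -> : size H - a = 1 by lia.
    rewrite -cat_cons; congr (_ ++ _).
    have eH : H = nth 0 H 0 :: drop 1 H by rewrite -(drop_nth 0) // drop0.
    rewrite {2}eH hx'; congr (nth _ _ _ :: _); lia.
Qed.

Lemma mem_cons_map (x0 : seq nat) (f : nat -> seq nat) p y : 0 < p -> x0 = f 0 ->
  (y \in x0 :: [seq f t | t <- iota 0 p]) <-> exists2 t, t < p & y = f t.
Proof.
move=> p0 ->; rewrite inE; split.
  case/orP => [/eqP ->|/mapP[t]]; first by exists 0.
  by rewrite mem_iota => ht ->; exists t => //; lia.
case=> t tp ->; apply/orP; right; apply/mapP; exists t => //; rewrite mem_iota; lia.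
Qed.

Lemma main_lemma (T : seq nat) (tau J : nat) : 1 <= tau ->
  inR T tau J.+2 -> inR T tau J.+1 ->
  [/\ Lroot T tau J.+1 = Lroot T tau J.+2,
      endR T tau J.+1 = endR T tau J.+2,
      Ltail T tau J.+1 = Ltail T tau J.+2,
      efull T tau J.+1 = efull T tau J.+2 &
      typeR T tau J.+1 = typeR T tau J.+2].
Proof.
move=> t1 hj hj1.
have inR_bound : forall i, inR T tau i -> i + 3 * tau <= size T + 2.
  by move=> i /and3P[].
have hn := inR_bound _ hj.
move: (hj) (hj1) => /and3P[_ _ pj] /and3P[_ _ pj1].
have eW2 : J.+2 + 3 * tau - 1 = (J + 3 * tau).+1 by lia.
have eW1 : J.+1 + 3 * tau - 1 = (J + 3 * tau - 1).+1 by lia.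
rewrite eW2 in pj; rewrite eW1 in pj1.
set W1 := sub T J.+1 (J + 3 * tau - 1).+1 in pj1.
set W2 := sub T (J.+1).+1 (J + 3 * tau).+1 in pj.
have sW1 : size W1 = 3 * tau - 1 by rewrite /W1 size_sub'; lia.
have sW2 : size W2 = 3 * tau - 1 by rewrite /W2 size_sub'; lia.
have [p0 pp] : 0 < per W1 /\ is_period W1 (per W1) by apply: per_pos; lia.
have [q0 qp] : 0 < per W2 /\ is_period W2 (per W2) by apply: per_pos; lia.
set p := per W1 in p0 pp pj1.
set q := per W2 in q0 qp pj.
have P1 : forall k l, J <= k -> l = k + p -> l < J + 3 * tau - 1 -> nth 0 T k = nth 0 T l.
  move=> k l hk -> hl; apply: (Tper_of _ pp) => //; lia.
have Q2 : forall k l, J.+1 <= k -> l = k + q -> l < J + 3 * tau -> nth 0 T k = nth 0 T l.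
  move=> k l hk -> hl; apply: (Tper_of _ qp) => //; lia.
have qlep : q <= p.
  apply: per_min => //; first by lia.
  apply: of_Tper; last move=> k hk hkp; try lia.
  case: (ltnP (k + p) (J + 3 * tau - 1)) => h; first by apply: P1 => //; lia.
  rewrite -(Q2 (k - q) k); try lia.
  rewrite (P1 (k - q) (k + p - q)); try lia.
  apply: Q2; lia.
have plep : p <= q.
  apply: per_min => //; first by lia.
  apply: of_Tper; last move=> k hk hkq; try lia.
  case: (ltnP J k) => h; first by apply: Q2 => //; lia.
  have -> : k = J by lia.
  rewrite (P1 J (J + p)); try lia.
  rewrite (Q2 (J + p) (J + p + q)); try lia.
  apply: esym; apply: P1; lia.
have pq : q = p by lia.
set F := find (fun d => ~~ inR T tau (J.+2 + d)) (iota 0 (J.+2 + size T).+3).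
have [Fm aF bF] : [/\ F < (J.+2 + size T).+3, ~~ inR T tau (J.+2 + F) &
     forall d, d < F -> ~~ ~~ inR T tau (J.+2 + d)].
  apply: find_iota_props; apply/hasP; exists (size T).+2.
    rewrite mem_iota; lia.
  apply/negP => /inR_bound; lia.
have FleN : F <= (size T).+2.
  case: (leqP F (size T).+2) => // h; have := bF _ h; rewrite negbK => /inR_bound; lia.
have F1 : 0 < F.
  case: (posnP F) => // h; by move: aF; rewrite h addn0 hj.
have FR : inR T tau (J.+2 + F.-1) by rewrite -[inR _ _ _]negbK; apply: bF; lia.
have hE := inR_bound _ FR.
have eE2 : endR T tau J.+2 = J.+2 + F + 3 * tau - 2 by [].
have eE1 : endR T tau J.+1 = J.+2 + F + 3 * tau - 2.
  have hf : find (fun d => ~~ inR T tau (J.+1 + d)) (iota 0 (J.+1 + size T).+3) = F.+1.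
    apply: find_iota_spec.
    - lia.
    - by rewrite -addSnnS.
    - case=> [|d] hd; first by rewrite addn0 hj1.
      by rewrite -addSnnS; apply: bF.
  change (J.+1 + find (fun d => ~~ inR T tau (J.+1 + d)) (iota 0 (J.+1 + size T).+3) + 3 * tau - 2 = J.+2 + F + 3 * tau - 2).
  rewrite hf; lia.
have eE : endR T tau J.+1 = endR T tau J.+2 by rewrite eE1 eE2.
have perj1 : perj T tau J.+1 = p by rewrite /perj eW1.
have perj2 : perj T tau J.+2 = p by rewrite /perj eW2 -pq.
have wordeq : sub T J.+1 (J.+1 + p) = sub T (J.+1 + p) (J.+1 + p + p).
  have -> : J.+1 + p = (J + p).+1 by lia.
  have -> : (J + p).+1 + p = (J + p + p).+1 by lia.
  apply: (@eq_from_nth _ 0); first by rewrite !size_sub'; lia.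
  rewrite size_sub'; last by lia.
  move=> i hi; rewrite !sub_nth; try lia.
  apply: P1; lia.
set f1 := fun t => sub T (J.+1 + t) (J.+1 + t + p).
set f2 := fun t => sub T (J.+2 + t) (J.+2 + t + p).
have eL1 : Lroot T tau J.+1 = foldr lexmin (f1 0) [seq f1 t | t <- iota 0 p].
  by rewrite /Lroot perj1 /f1 addn0.
have eL2 : Lroot T tau J.+2 = foldr lexmin (f2 0) [seq f2 t | t <- iota 0 p].
  by rewrite /Lroot perj2 /f2 addn0.
have eL : Lroot T tau J.+1 = Lroot T tau J.+2.
  rewrite eL1 eL2; apply: foldr_lexmin_eq => y.
  - move/(mem_cons_map _ p0 (erefl _)) => [t tp ->].
    apply/(mem_cons_map _ p0 (erefl _)).
    case: t tp => [|t] tp.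
      exists p.-1; first by lia.
      rewrite /f1 /f2 addn0 wordeq; congr sub; lia.
    exists t; first by lia.
    rewrite /f1 /f2; congr sub; lia.
  - move/(mem_cons_map _ p0 (erefl _)) => [t tp ->].
    apply/(mem_cons_map _ p0 (erefl _)).
    case: (ltnP t.+1 p) => h.
      exists t.+1 => //; rewrite /f1 /f2; congr sub; lia.
    exists 0 => //; rewrite /f1 /f2 addn0 wordeq; congr sub; lia.
have sH : size (Lroot T tau J.+2) = p.
  rewrite -eL eL1; have [hm _] := foldr_lexmin (f1 0) [seq f1 t | t <- iota 0 p].
  move/(mem_cons_map _ p0 (erefl _)): hm => [t tp ->].
  rewrite /f1.
  have -> : J.+1 + t = (J + t).+1 by lia.
  have -> : (J + t).+1 + p = (J + t + p).+1 by lia.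
  rewrite size_sub'; lia.
have eT : Ltail T tau J.+1 = Ltail T tau J.+2.
  rewrite /Ltail /= eL eE.
  set H := Lroot T tau J.+2.
  have sH2 : size H = p by exact: sH.
  set E := endR T tau J.+2.
  have EJ : E = J.+2 + F + 3 * tau - 2 by [].
  have eS : sub T J.+1 E = nth 0 T J :: sub T J.+2 E.
    rewrite /sub /= (drop_nth 0); last by rewrite size_takel; lia.
    rewrite nth_take //; lia.
  have sS : size (sub T J.+2 E) = E.-1 - J.+1.
    by rewrite /sub /= size_drop size_takel //; lia.
  have hx : nth 0 T J = nth 0 (sub T J.+2 E) (size H).-1.
    rewrite /sub /= nth_drop nth_take; last by lia.
    rewrite (P1 J (J + p)); try lia.
    congr nth; lia.
  have h2 : 2 * size H <= size (sub T J.+2 E) by rewrite sS; lia.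
  have hH : 0 < size H by lia.
  apply: eq_find => c; rewrite eS.
  apply/idP/idP => /(decomp_hasP _ _ hH) h; apply/(decomp_hasP _ _ hH).
    by apply/(decomp_shift _ hH h2 hx).
  by apply/(decomp_shift _ hH h2 hx).
split => //.
- by rewrite /efull eE eT.
- by rewrite /typeR eE eL.
Qed.

Theorem lemma5p12 (sigma n : nat) (T : seq nat) (mu : R) :
  size T = n ->
  all (fun c => c < sigma) T ->
  2 <= sigma -> sigma ^ 7 < n ->
  Rlt 0 mu -> Rlt mu (Rdiv 1 6) ->
  1 <= tau_of mu sigma n ->
  forall j : nat,
    inR T (tau_of mu sigma n) j -> ~~ inR' T (tau_of mu sigma n) j ->
    let tau := tau_of mu sigma n in
    [/\ Lroot T tau j.-1 = Lroot T tau j,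
        endR T tau j.-1 = endR T tau j,
        Ltail T tau j.-1 = Ltail T tau j,
        efull T tau j.-1 = efull T tau j &
        typeR T tau j.-1 = typeR T tau j].
Proof.
move=> _ _ _ _ _ _ t1 j hj hn tau.
have hj1 : inR T tau j.-1 by move: hn; rewrite /inR' hj /= negbK.
case: j hj hj1 {hn} => [|[|J]] hj hj1.
- by move: hj => /and3P[].
- by move: hj1 => /and3P[].
exact: main_lemma.
Qed.
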